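(* Let $\mathcal{A}=(Q,\Sigma,Q_I,\delta,\mathbb{C})$ be a parity tree automaton and $q\in Q$ a useful state. Then $da(\mathcal{A})\ge da(\mathcal{A}_q)$.
   Context: A parity tree automaton (PTA) $\mathcal{A}=(Q,\Sigma,Q_I,\delta,\mathbb{C})$ has $Q$ finite, $Q_I\subseteq Q$, $\delta\subseteq Q\times\Sigma\times Q\times Q$, $\mathbb{C}:Q\to\mathbb{N}$; a computation on $t:\{l,r\}^*\to\Sigma$ is $\phi:\{l,r\}^*\to Q$ with $\phi(\epsilon)\in Q_I$, $(\phi(v),t(v),\phi(vl),\phi(vr))\in\delta$ for all $v$, accepting if on every branch the largest color seen infinitely often is even; $ACC(\mathcal{A},t)$ is the set of accepting computations, $L(\mathcal{A})$ the trees having one. $\mathcal{A}_q$ is $\mathcal{A}$ with initial state set replaced by $\{q\}$. A state $q$ is useful if there exist $t\in L(\mathcal{A})$, $\phi\in ACC(\mathcal{A},t)$ and a node $v$ with $\phi(v)=q$. Degree of ambiguity $da(\mathcal{A})$: $k$ if $|ACC(\mathcal{A},t)|\le k$ for all $t$ and either $k=1$ or this fails for $k-1$; ''finite'' if all $ACC(\mathcal{A},t)$ are finite but no uniform bound exists; $\aleph_0$ if all are countable but not all finite; $2^{\aleph_0}$ otherwise; ordered $1<2<\dots<\text{finite}<\aleph_0<2^{\aleph_0}$. *)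

(* Defs.v *)
From Stdlib Require Import Classical ClassicalEpsilon.
From mathcomp Require Import all_boot.

Set Implicit Arguments.
Unset Strict Implicit.
Unset Printing Implicit Defensive.

(* Directions: false = l, true = r.  Nodes of the full binary tree: seq bool,
   child v l = rcons v false, child v r = rcons v true. *)
Definition node := seq bool.

Record PTA (Sigma : finType) := mkPTA {
  pta_Q : finType;
  pta_init : {set pta_Q};
  pta_delta : pta_Q -> Sigma -> pta_Q -> pta_Q -> bool;
  pta_col : pta_Q -> nat }.
Arguments pta_Q {Sigma} p.
Arguments pta_init {Sigma} p.
Arguments pta_delta {Sigma} p _ _ _ _.
Arguments pta_col {Sigma} p _.

Section PTADefs.
Variable Sigma : finType.
Variable A : PTA Sigma.
Local Notation Q := (pta_Q A).

Definition tree := node -> Sigma.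
Definition comp := node -> Q.

Definition is_computation (t : tree) (phi : comp) : Prop :=
  phi [::] \in pta_init A /\
  forall v : node,
    pta_delta A (phi v) (t v) (phi (rcons v false)) (phi (rcons v true)).

Definition branch_node (pi : nat -> bool) (n : nat) : node := mkseq pi n.

Definition accepting (phi : comp) : Prop :=
  forall pi : nat -> bool, exists c : nat,
    ~~ odd c /\
    (forall N, exists n, N <= n /\ pta_col A (phi (branch_node pi n)) = c) /\
    (exists N, forall n, N <= n -> pta_col A (phi (branch_node pi n)) <= c).

Definition ACC (t : tree) (phi : comp) : Prop :=
  is_computation t phi /\ accepting phi.

Definition in_language (t : tree) : Prop := exists phi, ACC t phi.

Definition useful (q : Q) : Prop :=
  exists t phi v, ACC t phi /\ phi v = q.

Definition card_le (P : comp -> Prop) (k : nat) : Prop :=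
  exists s : seq comp, size s <= k /\ forall phi, P phi -> List.In phi s.
Definition finite_set (P : comp -> Prop) : Prop :=
  exists s : seq comp, forall phi, P phi -> List.In phi s.
Definition countable_set (P : comp -> Prop) : Prop :=
  exists f : nat -> comp, forall phi, P phi -> exists n, f n = phi.

End PTADefs.
Arguments tree Sigma : clear implicits.
Arguments comp {Sigma} A.
Arguments is_computation {Sigma} A t phi.
Arguments accepting {Sigma} A phi.
Arguments ACC {Sigma} A t phi.
Arguments in_language {Sigma} A t.
Arguments useful {Sigma} A q.
Arguments card_le {Sigma} A P k.
Arguments finite_set {Sigma} A P.
Arguments countable_set {Sigma} A P.

Definition PTA_at (Sigma : finType) (A : PTA Sigma) (q : pta_Q A) : PTA Sigma :=
  @mkPTA Sigma (pta_Q A) [set q] (pta_delta A) (pta_col A).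

Inductive da_val := DA_k of nat | DA_finite | DA_aleph0 | DA_cont.

Definition da_rank (d : da_val) : nat * nat :=
  match d with
  | DA_k k => (0, k) | DA_finite => (1, 0) | DA_aleph0 => (2, 0) | DA_cont => (3, 0)
  end.

Definition da_le (d1 d2 : da_val) : Prop :=
  let (a1, b1) := da_rank d1 in let (a2, b2) := da_rank d2 in
  a1 < a2 \/ (a1 = a2 /\ b1 <= b2).

Definition uniformly_bounded (Sigma : finType) (A : PTA Sigma) (k : nat) : Prop :=
  forall t, card_le A (ACC A t) k.

Definition is_da_k (Sigma : finType) (A : PTA Sigma) (k : nat) : Prop :=
  1 <= k /\ uniformly_bounded A k /\ (k = 1 \/ ~ uniformly_bounded A k.-1).

Definition da (Sigma : finType) (A : PTA Sigma) : da_val :=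
  if excluded_middle_informative (exists k, is_da_k A k)
  then DA_k (epsilon (inhabits 0) (is_da_k A))
  else if excluded_middle_informative (forall t, finite_set A (ACC A t)) then DA_finite
  else if excluded_middle_informative (forall t, countable_set A (ACC A t))
       then DA_aleph0 else DA_cont.

(* Main.v *)
Require Import Defs.
From mathcomp Require Import all_boot.
From Stdlib Require Import Classical ClassicalEpsilon FunctionalExtensionality.
Set Implicit Arguments.
Unset Strict Implicit.

Lemma prefix_rcons_not (v w : node) b :
  prefix v (rcons w b) -> ~~ prefix v w -> rcons w b = v.
Proof.
move=> /prefixP [s Hs] Hn.
case/lastP: s Hs => [|s' x]; first by rewrite cats0.
rewrite -rcons_cat => /rcons_inj [Hw _].
by move: Hn; rewrite Hw prefix_prefix.
Qed.

Lemma mkseq_split (pi : nat -> bool) m k :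
  mkseq pi (m + k) = mkseq pi m ++ mkseq (fun i => pi (m + i)) k.
Proof.
rewrite /mkseq iotaD map_cat add0n; congr (_ ++ _).
by rewrite -[m in iota m _]addn0 iotaDl -map_comp.
Qed.

Lemma branch_noprefix (pi : nat -> bool) (v : node) n :
  ~~ prefix v (mkseq pi (size v)) -> ~~ prefix v (mkseq pi n).
Proof.
move=> Hn; apply/negP => Hp.
have Hs : size v <= n.
  by move/prefixP: Hp => [s] /(congr1 size); rewrite size_cat size_mkseq => ->; rewrite leq_addr.
move: Hp; rewrite -(subnKC Hs) mkseq_split prefixE take_size_cat ?size_mkseq //.
by move=> Heq; move: Hn; rewrite (eqP Heq) prefix_refl.
Qed.

Definition graft {X} (f g : node -> X) (v : node) : node -> X :=
  fun w => if prefix v w then g (drop (size v) w) else f w.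

Lemma graft_cat {X} (f g : node -> X) v w : graft f g v (v ++ w) = g w.
Proof. by rewrite /graft prefix_prefix drop_size_cat. Qed.

Section Graft.
Variables (Sigma : finType) (A : PTA Sigma) (q : pta_Q A).
Variables (t : tree Sigma) (phi : Defs.comp A) (v : node).
Hypothesis Hacc : ACC A t phi.
Hypothesis Hv : phi v = q.

Lemma graft_acc (t' : tree Sigma) (psi : Defs.comp A) :
  ACC (PTA_at q) t' psi -> ACC A (graft t t' v) (graft phi psi v).
Proof.
case: Hacc => [[Hi Ht] Ha] [[Hi' Ht'] Ha'].
have Hpsi0 : psi [::] = q by move: Hi'; rewrite /PTA_at /= inE => /eqP.
have Hnp : forall w, ~~ prefix v w -> forall b,
    graft phi psi v (rcons w b) = phi (rcons w b).
  move=> w Hw b; rewrite /graft; case: ifP => // Hp.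
  have E := prefix_rcons_not Hp Hw.
  by rewrite E drop_size Hpsi0 Hv.
split; [split|].
- rewrite /graft; case: ifP => Hp.
    by move: Hp; rewrite prefixs0 => /eqP Ev; rewrite Ev /= Hpsi0 -Hv Ev.
  done.
- move=> w; case Hp: (prefix v w).
  + move/prefixP: Hp => [s ->].
    rewrite !rcons_cat !graft_cat; exact: Ht'.
  + have Hw : ~~ prefix v w by rewrite Hp.
    rewrite !Hnp // /graft Hp; exact: Ht.
- move=> pi.
  case Hb: (prefix v (mkseq pi (size v))).
  + pose pi' := fun i => pi (size v + i).
    have E : forall k, graft phi psi v (branch_node pi (size v + k))
                       = psi (branch_node pi' k).
      move=> k; rewrite /branch_node mkseq_split.
      move: Hb; rewrite prefixE take_oversize ?size_mkseq // => /eqP ->.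
      by rewrite graft_cat.
    have [c [Hc [Hinf [N HN]]]] := Ha' pi'.
    exists c; split => //; split.
    * move=> M; have [n [Hn Hcn]] := Hinf M.
      exists (size v + n); split; first by apply: leq_trans Hn (leq_addl _ _).
      by rewrite E.
    * exists (size v + N) => n Hn.
      rewrite -(subnKC (leq_trans (leq_addr N (size v)) Hn)) E; apply: HN.
      by rewrite leq_subRL // (leq_trans (leq_addr N (size v)) Hn).
  + have [c [Hc [Hinf [N HN]]]] := Ha pi.
    have E : forall n, graft phi psi v (branch_node pi n) = phi (branch_node pi n).
      move=> n; rewrite /graft /branch_node.
      by rewrite (negbTE (branch_noprefix n (negbT Hb))).
    exists c; split => //; split.
    * move=> M; have [n [Hn Hcn]] := Hinf M; exists n; by rewrite E.
    * by exists N => n Hn; rewrite E; apply: HN.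
Qed.
End Graft.

Lemma In_map_seq {X Y} (f : X -> Y) x s : List.In x s -> List.In (f x) (map f s).
Proof. elim: s => //= y s IH [->|H]; [left|right; apply: IH]; done. Qed.

Lemma UB_mono (Sigma : finType) (B : PTA Sigma) m n :
  m <= n -> uniformly_bounded B m -> uniformly_bounded B n.
Proof.
move=> Hmn H t; have [s [Hs Hin]] := H t; exists s; split => //.
exact: leq_trans Hs Hmn.
Qed.

Lemma exists_da_k (Sigma : finType) (B : PTA Sigma) k :
  1 <= k -> uniformly_bounded B k -> exists j, is_da_k B j.
Proof.
elim: k => // k IH _ Hk.
case: k IH Hk => [|k] IH Hk; first by exists 1; split => //; split => //; left.
case: (classic (uniformly_bounded B k.+1)) => H; first exact: IH.
by exists k.+2; split => //; split => //; right.
Qed.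

Lemma da_mono (Sigma : finType) (B A : PTA Sigma)
  (H1 : forall k, uniformly_bounded A k -> uniformly_bounded B k)
  (H2 : (forall t, finite_set A (ACC A t)) -> forall t, finite_set B (ACC B t))
  (H3 : (forall t, countable_set A (ACC A t)) -> forall t, countable_set B (ACC B t)) :
  da_le (da B) (da A).
Proof.
rewrite /da.
destruct (excluded_middle_informative (exists k, is_da_k A k)) as [hk|nk].
  have [Hk1 [HUB _]] := epsilon_spec (inhabits 0) (is_da_k A) hk.
  set k := epsilon _ _ in Hk1 HUB *.
  have hB : exists j, is_da_k B j by apply: (exists_da_k Hk1); exact: H1.
  destruct (excluded_middle_informative (exists k, is_da_k B k)) as [u0|nB]; last by exfalso; apply: nB.
  have [Hj1 [HUBj Hj]] := epsilon_spec (inhabits 0) (is_da_k B) hB.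
  set j := epsilon _ _ in Hj1 HUBj Hj *.
  rewrite /da_le /=; right; split => //.
  rewrite leqNgt; apply/negP => Hkj.
  case: Hj => [Hj|Hj]; first by move: Hkj; rewrite Hj ltnNge Hk1.
  apply: Hj; apply: (UB_mono _ (H1 _ HUB)).
  by rewrite -ltnS (ltn_predK Hkj).
destruct (excluded_middle_informative (forall t, finite_set A (ACC A t))) as [hf|nf].
  destruct (excluded_middle_informative (exists k, is_da_k B k)) as [u2|w1].
    by rewrite /da_le /=; left.
  destruct (excluded_middle_informative (forall t, finite_set B (ACC B t))) as [u4|nf].
    by rewrite /da_le /=; right.
  by exfalso; apply: nf; apply: H2.
destruct (excluded_middle_informative (forall t, countable_set A (ACC A t))) as [hc|nc].
  destruct (excluded_middle_informative (exists k, is_da_k B k)) as [u6|w3].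
    by rewrite /da_le /=; left.
  destruct (excluded_middle_informative (forall t, finite_set B (ACC B t))) as [u8|w5].
    by rewrite /da_le /=; left.
  destruct (excluded_middle_informative (forall t, countable_set B (ACC B t))) as [u10|nc].
    by rewrite /da_le /=; right.
  by exfalso; apply: nc; apply: H3.
destruct (excluded_middle_informative (exists k, is_da_k B k)) as [u12|w7].
  by rewrite /da_le /=; left.
destruct (excluded_middle_informative (forall t, finite_set B (ACC B t))) as [u14|w9].
  by rewrite /da_le /=; left.
destruct (excluded_middle_informative (forall t, countable_set B (ACC B t))) as [u16|w11].
  by rewrite /da_le /=; left.
by rewrite /da_le /=; right.
Qed.

Theorem lemma3p4 (Sigma : finType) (A : PTA Sigma) (q : pta_Q A) :
  useful A q -> da_le (da (PTA_at q)) (da A).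
Proof.
move=> [t [phi [v [Hacc Hv]]]].
pose res := fun (g : Defs.comp A) (w : node) => g (v ++ w).
have Hres : forall psi : Defs.comp A, res (graft phi psi v) = psi.
  by move=> psi; apply: functional_extensionality => w; rewrite /res graft_cat.
apply: da_mono.
- move=> k Hk t'; have [s [Hs Hin]] := Hk (graft t t' v).
  exists (map res s); split; first by rewrite size_map.
  move=> psi Hpsi; rewrite -(Hres psi); apply: In_map_seq; apply: Hin.
  exact: (graft_acc Hacc Hv).
- move=> Hf t'; have [s Hin] := Hf (graft t t' v).
  exists (map res s) => psi Hpsi; rewrite -(Hres psi); apply: In_map_seq; apply: Hin.
  exact: (graft_acc Hacc Hv).
- move=> Hc t'; have [f Hf] := Hc (graft t t' v).
  exists (fun n => res (f n)) => psi Hpsi.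
  have [n Hn] := Hf _ (graft_acc Hacc Hv Hpsi).
  by exists n; rewrite Hn Hres.
Qed.
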